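(* Let $\theta$ be uniformly distributed on $[0,2\pi]$, let $k\in\{1,2,3\}$, $W=e^{-i\theta\sigma_k}$ and $G=\frac{\partial W}{\partial\theta}$. Let $A,C$ be arbitrary linear operators on $\mathbb{C}^2$ and let $B=D=\sigma_j$ for some $j\in\{0,1,2,3\}$. Then $$\mathbb{E}_\theta\,\text{Tr}[GAW^\dagger B]\,\text{Tr}[GCW^\dagger D]=\Big[\tfrac12-\tfrac{\delta_{j0}+\delta_{jk}}{2}\Big]\text{Tr}[AB]\,\text{Tr}[CD]+\Big[-\tfrac12-\tfrac{\delta_{j0}+\delta_{jk}}{2}\Big]\text{Tr}[AB\sigma_k]\,\text{Tr}[CD\sigma_k].$$
   Context: $\sigma_0=I$, $\sigma_1,\sigma_2,\sigma_3$ are the Pauli matrices $X,Y,Z$; $\delta$ is the Kronecker delta; $\mathbb{E}_\theta g=\frac1{2\pi}\int_0^{2\pi}g\,d\theta$. *)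

(* Defs.v *)
From Stdlib Require Import Reals.
From Coquelicot Require Import Hierarchy RInt.
From HB Require Import structures.
From mathcomp Require Import all_boot all_order all_algebra.
From mathcomp Require Import Rstruct complex.
Set Implicit Arguments. Unset Strict Implicit. Unset Printing Implicit Defensive.
Import Order.TTheory GRing.Theory Num.Theory.

Local Open Scope ring_scope.
Local Open Scope complex_scope.

Notation Cx := (complex R).

Definition iC : Cx := complex.Complex 0 1.

Definition pauliX : 'M[Cx]_2 := \matrix_(r, c) (if r == c then 0 else 1).
Definition pauliY : 'M[Cx]_2 :=
  \matrix_(r, c) (if r == c then 0 else if r == 0 then - iC else iC).
Definition pauliZ : 'M[Cx]_2 :=
  \matrix_(r, c) (if r == c then (if r == 0 then 1 else -1) else 0).
Definition pauli (a : 'I_4) : 'M[Cx]_2 :=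
  match val a with
  | 0%N => 1%:M
  | 1%N => pauliX
  | 2%N => pauliY
  | _ => pauliZ
  end.

Definition adj (M : 'M[Cx]_2) : 'M[Cx]_2 := (map_mx conjc M)^T.

Definition expSum (M : 'M[Cx]_2) (n : nat) : 'M[Cx]_2 :=
  \sum_(m < n) ((m`!)%:R)^-1 *: M ^+ m.
Definition is_mexp (M E : 'M[Cx]_2) : Prop :=
  forall r c : 'I_2,
    Un_cv (fun n => complex.Re (expSum M n r c)) (complex.Re (E r c)) /\
    Un_cv (fun n => complex.Im (expSum M n r c)) (complex.Im (E r c)).

Definition is_mderiv (W : R -> 'M[Cx]_2) (t : R) (D : 'M[Cx]_2) : Prop :=
  forall r c : 'I_2,
    derivable_pt_lim (fun s => complex.Re (W s r c)) t (complex.Re (D r c)) /\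
    derivable_pt_lim (fun s => complex.Im (W s r c)) t (complex.Im (D r c)).

Definition Etheta (g : R -> Cx) : Cx :=
  (Rinv (2 * PI) * @RInt Hierarchy.R_CompleteNormedModule (fun t => complex.Re (g t)) 0 (2 * PI))%R +i*
  (Rinv (2 * PI) * @RInt Hierarchy.R_CompleteNormedModule (fun t => complex.Im (g t)) 0 (2 * PI))%R.

(* Main.v *)
Require Import Defs.
From Stdlib Require Import Reals Lra Lia FunctionalExtensionality.
From Coquelicot Require Import Coquelicot.
Open Scope R_scope.
Lemma cv_const (c : R) : Un_cv (fun _ => c) c.
Proof. intros eps He; exists 0%nat; intros; unfold R_dist; rewrite Rminus_diag_eq, Rabs_R0; auto. Qed.

Lemma cos_cv t : Un_cv (fun N => sum_f_R0 (fun i => cos_n i * (t*t)^i) N) (cos t).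
Proof. unfold cos. destruct (exist_cos (Rsqr t)) as [l Hl]. exact Hl. Qed.

Lemma sin_cv t : Un_cv (fun N => t * sum_f_R0 (fun i => sin_n i * (t*t)^i) N) (sin t).
Proof. unfold sin. destruct (exist_sin (Rsqr t)) as [l Hl]. apply CV_mult; [apply cv_const| exact Hl]. Qed.

Lemma cv_interleave (u v : nat -> R) l s : Un_cv v l ->
  (forall q, u (q + q + s)%nat = v q /\ u (S (q + q + s)) = v q) -> Un_cv u l.
Proof.
intros Hv H eps He. destruct (Hv eps He) as [N HN]. exists (N + N + s)%nat. intros n Hn.
destruct (Nat.Even_or_Odd (n - s)) as [[q Hq]|[q Hq]].
- replace n with (q + q + s)%nat by lia. rewrite (proj1 (H q)). apply HN. lia.
- replace n with (S (q + q + s)) by lia. rewrite (proj2 (H q)). apply HN. lia.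
Qed.

Lemma cv_lin (u v : nat -> R) a b d e : Un_cv u a -> Un_cv v b ->
  Un_cv (fun n => u n * d + v n * e) (a * d + b * e).
Proof. intros Hu Hv. apply CV_plus; apply CV_mult; auto; apply cv_const. Qed.

Lemma deriv_cs (d e t : R) :
  derivable_pt_lim (fun s => cos s * d + sin s * e) t (- sin t * d + cos t * e).
Proof. apply is_derive_Reals. auto_derive; [exact I| ring]. Qed.

Definition c4 (t : R) : R := cos (4 * t).
Definition s4 (t : R) : R := sin (4 * t).

Lemma c4E t : c4 t = let u := cos t * cos t - sin t * sin t in
  let v := sin t * cos t + cos t * sin t in u * u - v * v.
Proof.
unfold c4; replace (4 * t) with ((t + t) + (t + t)) by ring.
rewrite cos_plus, cos_plus, sin_plus; ring.
Qed.

Lemma s4E t : s4 t = let u := cos t * cos t - sin t * sin t in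
  let v := sin t * cos t + cos t * sin t in v * u + u * v.
Proof.
unfold s4; replace (4 * t) with ((t + t) + (t + t)) by ring.
rewrite sin_plus, cos_plus, sin_plus; ring.
Qed.

Lemma inv2PI (x : R) : / (2 * PI) * (2 * PI * x) = x.
Proof. assert (H := PI_RGT_0); field; lra. Qed.

Lemma int_trig (a b d : R) :
  is_RInt (fun t => a + b * c4 t + d * s4 t)%R 0 (2 * PI) (2 * PI * a)%R.
Proof.
set (F := (fun t => a * t + b * s4 t / 4 - d * c4 t / 4)%R).
replace (2 * PI * a)%R with (minus (F (2 * PI)%R) (F 0%R)).
- apply (is_RInt_derive F).
  + intros x _; unfold F, c4, s4; auto_derive; [exact I| field].
  + intros x _; apply (ex_derive_continuous (K:=R_AbsRing) (V:=R_NormedModule)); unfold c4, s4; auto_derive; exact I.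
- unfold F, minus, plus, opp, c4, s4; simpl.
  replace (4 * (2 * PI))%R with (0 + 2 * INR 4 * PI)%R by (simpl; field).
  rewrite sin_period, cos_period; replace (4 * 0) with 0 by ring; rewrite sin_0, cos_0; field.
Qed.



Lemma sc (t : R) : sin t * sin t = 1 - cos t * cos t.
Proof. assert (H := sin2_cos2 t); unfold Rsqr in H; lra. Qed.

From HB Require Import structures.
From mathcomp Require Import all_boot all_order all_algebra.
From mathcomp Require Import Rstruct complex.
From mathcomp Require Import ring.
Import Order.TTheory GRing.Theory Num.Theory.
Local Open Scope ring_scope.
Local Open Scope complex_scope.

Lemma iC2 : iC ^+ 2 = -1.
Proof. by rewrite expr2 /iC; simpc. Qed.

Definition Wm (k : 'I_4) (c s : R) : 'M[Cx]_2 := c%:C *: 1%:M - (iC * s%:C) *: pauli k.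
Definition Gm (k : 'I_4) (c s : R) : 'M[Cx]_2 := - s%:C *: 1%:M - (iC * c%:C) *: pauli k.

Lemma ReE (u v : R) (b : bool) (z : Cx) :
  complex.Re (u%:C * b%:R - iC * v%:C * z) = u * b%:R + v * complex.Im z.
Proof. case: z => p q; case: b; rewrite /iC /=; simpc => /=. all: ring. Qed.

Lemma ImE (u v : R) (b : bool) (z : Cx) :
  complex.Im (u%:C * b%:R - iC * v%:C * z) = u * 0 + v * (- complex.Re z).
Proof. case: z => p q; case: b; rewrite /iC /=; simpc => /=. all: ring. Qed.
Definition mk2 (a b c d : Cx) : 'M[Cx]_2 :=
  \matrix_(i, j) if i == 0 then (if j == 0 then a else b) else (if j == 0 then c else d).

Lemma mk2_eq a b c d a' b' c' d' : a = a' -> b = b' -> c = c' -> d = d' ->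
  mk2 a b c d = mk2 a' b' c' d'.
Proof. by move=> -> -> -> ->. Qed.

Lemma mul_mk2 a b c d a' b' c' d' :
  mk2 a b c d *m mk2 a' b' c' d' =
  mk2 (a * a' + b * c') (a * b' + b * d') (c * a' + d * c') (c * b' + d * d').
Proof.
apply/matrixP => i j; rewrite !mxE !big_ord_recl big_ord0 !mxE /=.
by case: i => [[|[|?]] ?] //=; case: j => [[|[|?]] ?] //=; rewrite addr0.
Qed.

Lemma add_mk2 a b c d a' b' c' d' :
  mk2 a b c d + mk2 a' b' c' d' = mk2 (a + a') (b + b') (c + c') (d + d').
Proof.
apply/matrixP => i j; rewrite !mxE /=.
by case: i => [[|[|?]] ?] //=; case: j => [[|[|?]] ?] //=.
Qed.

Lemma opp_mk2 a b c d : - mk2 a b c d = mk2 (- a) (- b) (- c) (- d).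
Proof.
apply/matrixP => i j; rewrite !mxE /=.
by case: i => [[|[|?]] ?] //=; case: j => [[|[|?]] ?] //=.
Qed.

Lemma scale_mk2 x a b c d : x *: mk2 a b c d = mk2 (x * a) (x * b) (x * c) (x * d).
Proof.
apply/matrixP => i j; rewrite !mxE /=.
by case: i => [[|[|?]] ?] //=; case: j => [[|[|?]] ?] //=.
Qed.

Lemma tr_mk2 a b c d : \tr (mk2 a b c d) = a + d.
Proof. by rewrite /mxtrace !big_ord_recl big_ord0 !mxE /= addr0. Qed.

Lemma adj_mk2 a b c d : adj (mk2 a b c d) = mk2 (conjc a) (conjc c) (conjc b) (conjc d).
Proof.
apply/matrixP => i j; rewrite !mxE /=.
by case: i => [[|[|?]] ?] //=; case: j => [[|[|?]] ?] //=.
Qed.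

Lemma mk2E (M : 'M[Cx]_2) : M = mk2 (M 0 0) (M 0 1) (M 1 0) (M 1 1).
Proof.
apply/matrixP => i j; rewrite !mxE.
by case: i => [[|[|?]] ?] //=; case: j => [[|[|?]] ?] //=; congr (M _ _); apply: val_inj.
Qed.

Lemma one_mk2 : 1%:M = mk2 1 0 0 1.
Proof.
apply/matrixP => i j; rewrite !mxE /=.
by case: i => [[|[|?]] ?] //=; case: j => [[|[|?]] ?] //=.
Qed.

Lemma pX_mk2 : pauliX = mk2 0 1 1 0.
Proof.
apply/matrixP => i j; rewrite !mxE /=.
by case: i => [[|[|?]] ?] //=; case: j => [[|[|?]] ?] //=.
Qed.

Lemma pY_mk2 : pauliY = mk2 0 (- iC) iC 0.
Proof.
apply/matrixP => i j; rewrite !mxE /=.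
by case: i => [[|[|?]] ?] //=; case: j => [[|[|?]] ?] //=.
Qed.

Lemma pZ_mk2 : pauliZ = mk2 1 0 0 (-1).
Proof.
apply/matrixP => i j; rewrite !mxE /=.
by case: i => [[|[|?]] ?] //=; case: j => [[|[|?]] ?] //=.
Qed.


Lemma conj_iC : conjc iC = - iC.
Proof. by rewrite /iC; simpc. Qed.

Lemma conjM (x y : Cx) : conjc (x * y) = conjc x * conjc y. Proof. exact: rmorphM. Qed.
Lemma conjD (x y : Cx) : conjc (x + y) = conjc x + conjc y. Proof. exact: rmorphD. Qed.
Lemma conjB (x y : Cx) : conjc (x - y) = conjc x - conjc y. Proof. exact: rmorphB. Qed.
Lemma conjN (x : Cx) : conjc (- x) = - conjc x. Proof. exact: rmorphN. Qed.
Lemma conj0 : conjc (0 : Cx) = 0. Proof. exact: rmorph0. Qed.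
Lemma conj1 : conjc (1 : Cx) = 1. Proof. exact: rmorph1. Qed.
Lemma conj_realC (x : R) : conjc (x%:C) = x%:C.
Proof. by rewrite /=; simpc. Qed.

Definition Vm (k : 'I_4) (c s : R) : 'M[Cx]_2 := c%:C *: 1%:M + (iC * s%:C) *: pauli k.

Lemma adjWm (k : 'I_4) c s : adj (Wm k c s) = Vm k c s.
Proof.
rewrite /Wm /Vm /pauli; case: k => [[|[|[|[|?]]]] ?] /=;
 rewrite ?one_mk2;
  rewrite ?pX_mk2 ?pY_mk2 ?pZ_mk2 ?one_mk2 !scale_mk2 ?opp_mk2 !add_mk2 adj_mk2;
  apply: mk2_eq; rewrite ?(conjD, conjN, conjB, conjM, conj_iC, conj_realC,
     conj0, conj1); ring.
Qed.


Definition Kd (k j : 'I_4) : Cx := ((j == 0%N :> nat)%:R + (j == k)%:R : Cx).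

Lemma pw (k j : 'I_4) (hk : k != 0%N :> nat) (A C : 'M[Cx]_2) (c s : R)
  (hcs : (s%:C)^+2 = 1 - (c%:C)^+2) :
  let S := pauli k in let B := pauli j in let delta := Kd k j in
  \tr (Gm k c s *m A *m Vm k c s *m B) * \tr (Gm k c s *m C *m Vm k c s *m B)
  = ((2^-1 - delta / 2) * \tr (A *m B) * \tr (C *m B)
    + (- 2^-1 - delta / 2) * \tr (A *m B *m S) * \tr (C *m B *m S))
    + (- (1 - delta) / 2 * (\tr (A *m B) * \tr (C *m B) + \tr (A *m B *m S) * \tr (C *m B *m S)))
       * ((c%:C^+2 - s%:C^+2)^+2 - (2 * c%:C * s%:C)^+2)
    + ((1 - delta) / 2 * iC * (\tr (A *m B *m S) * \tr (C *m B) + \tr (A *m B) * \tr (C *m B *m S)))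
       * (2 * (c%:C^+2 - s%:C^+2) * (2 * c%:C * s%:C)).
Proof.
move=> S B delta; rewrite {}/S {}/B {}/delta /Kd /Gm /Vm.
rewrite [A]mk2E [C]mk2E.
move: (A 0 0) (A 0 1) (A 1 0) (A 1 1) (C 0 0) (C 0 1) (C 1 0) (C 1 1) => a b c' d a' b' c'' d'.
rewrite /pauli.
case: k hk => [[|[|[|[|?]]]] ?] //= _; case: j => [[|[|[|[|?]]]] ?] //=;
  rewrite ?pX_mk2 ?pY_mk2 ?pZ_mk2 ?one_mk2 !scale_mk2 ?opp_mk2 !add_mk2 !mul_mk2 !tr_mk2;
  by field: iC2 hcs.
Qed.

Lemma Re_lin (K0 K1 K2 : Cx) (x y : R) :
  complex.Re (K0 + K1 * x%:C + K2 * y%:C) = (complex.Re K0 + complex.Re K1 * x + complex.Re K2 * y)%R.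
Proof. case: K0 K1 K2 => [? ?] [? ?] [? ?] /=; simpc => /=. ring. Qed.
Lemma Im_lin (K0 K1 K2 : Cx) (x y : R) :
  complex.Im (K0 + K1 * x%:C + K2 * y%:C) = (complex.Im K0 + complex.Im K1 * x + complex.Im K2 * y)%R.
Proof. case: K0 K1 K2 => [? ?] [? ?] [? ?] /=; simpc => /=. ring. Qed.

Lemma Etheta_trig (K0 K1 K2 : Cx) :
  Etheta (fun t => K0 + K1 * (c4 t)%:C + K2 * (s4 t)%:C) = K0.
Proof.
rewrite /Etheta.
have h1 : (fun t => complex.Re (K0 + K1 * (c4 t)%:C + K2 * (s4 t)%:C))
   = (fun t => complex.Re K0 + complex.Re K1 * c4 t + complex.Re K2 * s4 t)%R.
  by apply: functional_extensionality => t; rewrite Re_lin.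
have h2 : (fun t => complex.Im (K0 + K1 * (c4 t)%:C + K2 * (s4 t)%:C))
   = (fun t => complex.Im K0 + complex.Im K1 * c4 t + complex.Im K2 * s4 t)%R.
  by apply: functional_extensionality => t; rewrite Im_lin.
rewrite h1 h2 !(is_RInt_unique _ _ _ _ (int_trig _ _ _)).
by rewrite -!RmultE !inv2PI; case: K0 {h1 h2}.
Qed.
Lemma pauli_sq (k : 'I_4) : k != 0%N :> nat -> pauli k * pauli k = 1.
Proof.
have -> : (1 : 'M[Cx]_2) = mk2 1 0 0 1 by exact: one_mk2.
rewrite -mulmxE /pauli; case: k => [[|[|[|[|?]]]] ?] //= _;
  rewrite ?pX_mk2 ?pY_mk2 ?pZ_mk2 mul_mk2; congr mk2; ring: iC2.
Qed.

Lemma pow_pauli (k : 'I_4) n : k != 0%N :> nat ->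
  pauli k ^+ n = if odd n then pauli k else 1.
Proof.
move=> hk; elim: n => [|n IH]; first by rewrite expr0.
rewrite exprS IH /=; case: (odd n) => /=; first by rewrite pauli_sq.
by rewrite mulr1.
Qed.

Section Series.
Variable t : R.

Definition aS (m : nat) : R := if odd m then 0 else (-1) ^+ (m./2) * t ^+ m / (m`!)%:R.
Definition bS (m : nat) : R := if odd m then (-1) ^+ (m./2) * t ^+ m / (m`!)%:R else 0.

Lemma zpow q : (- (iC * t%:C)) ^+ (q.*2) = ((-1) ^+ q * t ^+ (q.*2))%:C.
Proof.
have h2 : (- (iC * t%:C)) ^+ 2 = (- t ^+ 2)%:C.
  by rewrite sqrrN exprMn iC2 rmorphN rmorphXn mulN1r.
have e : (- t ^+ 2) ^+ q = (-1) ^+ q * t ^+ (2 * q) :> R by rewrite [LHS]exprNn exprM.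
by rewrite -mul2n exprM h2 -rmorphXn e.
Qed.

Lemma term (k : 'I_4) (hk : k != 0%N :> nat) n :
  ((n`!)%:R)^-1 *: (- (iC * t%:C) *: pauli k) ^+ n
  = (aS n)%:C *: 1 - (iC * (bS n)%:C) *: pauli k.
Proof.
have hf m : ((m`!)%:R : Cx) != 0 by rewrite pnatr_eq0 -lt0n fact_gt0.
rewrite exprZn pow_pauli // scalerA /aS /bS.
have [q [->|->]] : exists q, n = q.*2 \/ n = q.*2.+1.
  exists n./2; move: (odd_double_half n); case: (odd n) => /= e; [right|left]; by rewrite -{1}e ?add1n ?add0n.
- rewrite odd_double /= doubleK zpow rmorph0 mulr0 scale0r subr0; congr (_ *: _).
  rewrite !(rmorphM, fmorphV, rmorph_nat, rmorphXn, rmorphN, rmorph1).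
  by field.
- rewrite /= odd_double /= uphalf_double exprS zpow rmorph0 scale0r sub0r -scaleNr; congr (_ *: _).
  rewrite !(rmorphM, fmorphV, rmorph_nat, rmorphXn, rmorphN, rmorph1) exprS.
  by field.
Qed.

Definition ceS n : R := \sum_(m < n) aS m.
Definition soS n : R := \sum_(m < n) bS m.

Lemma expSumE (k : 'I_4) (hk : k != 0%N :> nat) n :
  expSum (- (iC * t%:C) *: pauli k) n = (ceS n)%:C *: 1 - (iC * (soS n)%:C) *: pauli k.
Proof.
elim: n => [|n IH].
  by rewrite /expSum /ceS /soS !big_ord0 rmorph0 mulr0 !scale0r subr0.
rewrite /expSum big_ord_recr /= -/(expSum _ n) IH term // /ceS /soS !big_ord_recr /=.
rewrite !rmorphD mulrDr !scalerDl opprD addrACA //.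
Qed.

Lemma expSum_entry (k : 'I_4) (hk : k != 0%N :> nat) n (r c : 'I_2) :
  expSum (- (iC * t%:C) *: pauli k) n r c =
  (ceS n)%:C * (r == c)%:R - iC * (soS n)%:C * pauli k r c.
Proof. by rewrite expSumE // !mxE. Qed.

Lemma aS_even i : aS (i.*2) = cos_n i * pow (t * t) i.
Proof.
have hm1 : IZR (Zneg xH) = -1 by exact: (opp_IZR (Zpos xH)).
rewrite /aS odd_double doubleK /cos_n !RpowE INRE factE multE mul2n hm1.
rewrite RmultE -expr2 -exprM mul2n /=.
by rewrite mulrAC.
Qed.

Lemma bS_odd i : bS (i.*2.+1) = t * (sin_n i * pow (t * t) i).
Proof.
have hm1 : IZR (Zneg xH) = -1 by exact: (opp_IZR (Zpos xH)).
rewrite /bS /= odd_double uphalf_double /sin_n !RpowE INRE factE multE plusE mul2n addn1 hm1.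
rewrite RmultE -expr2 -exprM mul2n exprS /=.
rewrite RdivE; ring.
Qed.

Lemma aS_odd i : aS (i.*2.+1) = 0.
Proof. by rewrite /aS /= odd_double. Qed.
Lemma bS_even i : bS (i.*2) = 0.
Proof. by rewrite /bS odd_double. Qed.

Lemma ce_odd q : ceS (q.*2.+1) = sum_f_R0 (fun i => cos_n i * pow (t * t) i) q.
Proof.
elim: q => [|q IH].
  by rewrite /ceS big_ord_recr big_ord0 /= add0r -(aS_even 0).
rewrite {1}/ceS doubleS (big_ord_recr (q.*2.+2)) (big_ord_recr (q.*2.+1)) /= -/(ceS _) IH aS_odd addr0 -doubleS aS_even.
by [].
Qed.

Lemma ce_even q : ceS (q.*2.+2) = ceS (q.*2.+1).
Proof. by rewrite /ceS big_ord_recr /= aS_odd addr0. Qed.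

Lemma so_even q : soS (q.*2.+2) = t * sum_f_R0 (fun i => sin_n i * pow (t * t) i) q.
Proof.
elim: q => [|q IH].
  by rewrite /soS !big_ord_recr big_ord0 /= add0r (bS_even 0) add0r (bS_odd 0).
rewrite {1}/soS doubleS (big_ord_recr (q.*2.+3)) (big_ord_recr (q.*2.+2)) /= -/(soS _) IH -doubleS bS_even addr0 bS_odd.
by rewrite mulrDr.
Qed.

Lemma so_odd q : soS (q.*2.+3) = soS (q.*2.+2).
Proof. by rewrite /soS big_ord_recr /= -doubleS bS_even addr0. Qed.

Lemma ceS_cv : Un_cv ceS (cos t).
Proof.
apply: (cv_interleave _ _ _ 1 (cos_cv t)) => q.
rewrite !plusE addnn addn1; split; first exact: ce_odd.
by rewrite ce_even ce_odd.
Qed.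

Lemma soS_cv : Un_cv soS (sin t).
Proof.
apply: (cv_interleave _ _ _ 2 (sin_cv t)) => q.
rewrite !plusE addnn addn2; split; first exact: so_even.
by rewrite so_odd so_even.
Qed.
End Series.

Lemma cplx_ext (z w : Cx) : complex.Re z = complex.Re w -> complex.Im z = complex.Im w -> z = w.
Proof. by case: z w => [? ?] [? ?] /= -> ->. Qed.

Lemma ReE' (u v : R) (b : bool) (z : Cx) :
  complex.Re (- u%:C * b%:R - iC * v%:C * z) = - u * b%:R + v * complex.Im z.
Proof. case: z => p q; case: b; rewrite /iC /=; simpc => /=. all: ring. Qed.

Lemma ImE' (u v : R) (b : bool) (z : Cx) :
  complex.Im (- u%:C * b%:R - iC * v%:C * z) = - u * 0 + v * (- complex.Re z).
Proof. case: z => p q; case: b; rewrite /iC /=; simpc => /=. all: ring. Qed.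

Lemma W_eq (k : 'I_4) (hk : k != 0%N :> nat) (t : R) (W0 : 'M[Cx]_2) :
  is_mexp (- (iC * t%:C) *: pauli k) W0 -> W0 = Wm k (cos t) (sin t).
Proof.
move=> h; apply/matrixP => r c; have [h1 h2] := h r c.
have e1 : (fun n => complex.Re (expSum (- (iC * t%:C) *: pauli k) n r c))
  = (fun n => ceS t n * (r == c)%:R + soS t n * complex.Im (pauli k r c)).
  by apply: functional_extensionality => n; rewrite expSum_entry // ReE.
have e2 : (fun n => complex.Im (expSum (- (iC * t%:C) *: pauli k) n r c))
  = (fun n => ceS t n * 0 + soS t n * (- complex.Re (pauli k r c))).
  by apply: functional_extensionality => n; rewrite expSum_entry // ImE.
rewrite e1 in h1; rewrite e2 in h2.
have l1 := UL_sequence _ _ _ h1 (cv_lin _ _ _ _ _ _ (ceS_cv t) (soS_cv t)).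
have l2 := UL_sequence _ _ _ h2 (cv_lin _ _ _ _ _ _ (ceS_cv t) (soS_cv t)).
rewrite /Wm !mxE; apply: cplx_ext.
  by rewrite ReE l1.
by rewrite ImE l2.
Qed.

Lemma G_eq (k : 'I_4) (W0 : R -> 'M[Cx]_2)
  (hW : forall s, W0 s = Wm k (cos s) (sin s)) (t : R) (G0 : 'M[Cx]_2) :
  is_mderiv W0 t G0 -> G0 = Gm k (cos t) (sin t).
Proof.
move=> h; apply/matrixP => r c; have [h1 h2] := h r c.
have e1 : (fun s => complex.Re (W0 s r c))
  = (fun s => cos s * (r == c)%:R + sin s * complex.Im (pauli k r c)).
  by apply: functional_extensionality => s; rewrite hW /Wm !mxE ReE.
have e2 : (fun s => complex.Im (W0 s r c))
  = (fun s => cos s * 0 + sin s * (- complex.Re (pauli k r c))).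
  by apply: functional_extensionality => s; rewrite hW /Wm !mxE ImE.
rewrite e1 in h1; rewrite e2 in h2.
have l1 := uniqueness_limite _ _ _ _ h1 (deriv_cs _ _ t).
have l2 := uniqueness_limite _ _ _ _ h2 (deriv_cs _ _ t).
rewrite /Gm !mxE; apply: cplx_ext.
  by rewrite ReE' l1.
by rewrite ImE' l2.
Qed.

Theorem lemma4 (k j : 'I_4) (hk : k != 0%N :> nat)
  (A C : 'M[Cx]_2) (W G : R -> 'M[Cx]_2)
  (hW : forall t : R, is_mexp (- (iC * t%:C) *: pauli k) (W t))
  (hG : forall t : R, is_mderiv W t (G t)) :
  let B := pauli j in
  let D := pauli j in
  let delta := ((j == 0%N :> nat)%:R + (j == k)%:R : Cx) in
  Etheta (fun t => \tr (G t *m A *m adj (W t) *m B) *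
                   \tr (G t *m C *m adj (W t) *m D))
  = (2^-1 - delta / 2) * \tr (A *m B) * \tr (C *m D)
    + (- 2^-1 - delta / 2) * \tr (A *m B *m pauli k) * \tr (C *m D *m pauli k).
Proof.
move=> B D delta.
have hW' : forall s, W s = Wm k (cos s) (sin s) := fun s => @W_eq k hk s (W s) (hW s).
have hG' : forall s, G s = Gm k (cos s) (sin s) := fun s => @G_eq k W hW' s (G s) (hG s).
set a0 := \tr (A *m B); set b0 := \tr (C *m D).
set a1 := \tr (A *m B *m pauli k); set b1 := \tr (C *m D *m pauli k).
set K0 := (2^-1 - delta / 2) * a0 * b0 + (- 2^-1 - delta / 2) * a1 * b1.
set K1 := - (1 - delta) / 2 * (a0 * b0 + a1 * b1).
set K2 := (1 - delta) / 2 * iC * (a1 * b0 + a0 * b1).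
have -> : (fun t => \tr (G t *m A *m adj (W t) *m B) * \tr (G t *m C *m adj (W t) *m D))
  = (fun t => K0 + K1 * (c4 t)%:C + K2 * (s4 t)%:C).
  apply: functional_extensionality => t.
  have hcs : ((sin t)%:C)^+2 = 1 - ((cos t)%:C)^+2.
    have := congr1 (real_complex R) (sc t).
    by rewrite rmorphB rmorph1 !rmorphM !expr2.
  rewrite hW' hG' adjWm /D pw //.
  rewrite /K0 /K1 /K2 /a0 /b0 /a1 /b1 /delta /Kd c4E s4E /=.
  rewrite !(RmultE, RminusE, RplusE) !(rmorphB, rmorphD, rmorphM).
  by field.
exact: Etheta_trig.
Qed.
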